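(* For every iteration index $j\ge1$ generated during the $l$-th cycle of RPF-SFISTA, $\|\xi_j-z_{l-1}\|^2\le C_{\bar\mu}(z_{l-1})$.
   Context: Setup. Let $f:\mathbb R^n\to\mathbb R$ be convex and differentiable with $\|\nabla f(z')-\nabla f(z)\|\le\bar L\|z'-z\|$ for all $z,z'\in\mathbb R^n$ (some $\bar L\ge0$). Let $h:\mathbb R^n\to(-\infty,\infty]$ be proper, lower semicontinuous and convex with domain $\mathcal H$. Let $\phi:=f+h$ be $\bar\mu$-strongly convex for some $\bar\mu>0$, with (unique) minimizer $z^*$. Write $\ell_f(u;x):=f(x)+\langle\nabla f(x),u-x\rangle$. Define $C_{\bar\mu}(z):=\frac{8}{\bar\mu}[\phi(z)-\phi(z^* )]$. RPF-SFISTA. Parameters $\chi\in(0,1)$, $\beta>1$; inputs $\mu_0>0$, $\bar M_0>0$, $z_0\in\mathcal H$, $\hat\epsilon>0$. The method runs in cycles $l=1,2,\dots$. At the start of cycle $l$: choose $\underline M_l\in[\max\{\bar M_{l-1}/4,\bar M_0\},\bar M_{l-1}]$ (so $\underline M_1=\bar M_0$), set $\mu:=\mu_{l-1}$, $x_0:=z_{l-1}$, $\xi_0:=y_0:=x_0$, $A_0:=0$, $\tau_0:=1$, $L_0:=\underline M_l$. Then for $j=1,2,\dots$: (i) set $L_j:=L_{j-1}$; (ii) compute $a_{j-1}=\frac{\tau_{j-1}+\sqrt{\tau_{j-1}^2+4\tau_{j-1}A_{j-1}L_j}}{2L_j}$, $\tilde x_{j-1}=\frac{A_{j-1}y_{j-1}+a_{j-1}x_{j-1}}{A_{j-1}+a_{j-1}}$,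 $y_j=\arg\min_{u}\{\ell_f(u;\tilde x_{j-1})+h(u)+\frac{L_j}{2}\|u-\tilde x_{j-1}\|^2\}$; if $f(y_j)\le\ell_f(y_j;\tilde x_{j-1})+\frac{(1-\chi)L_j}{4}\|y_j-\tilde x_{j-1}\|^2$ go to (iii), otherwise replace $L_j$ by $\beta L_j$ and repeat (ii); (iii) set $\xi_j:=y_j$ if $\phi(y_j)\le\phi(\xi_{j-1})$ and $\xi_j:=\xi_{j-1}$ otherwise; $A_j:=A_{j-1}+a_{j-1}$; $\tau_j:=\tau_{j-1}+a_{j-1}\mu/2$; $s_j:=L_j(\tilde x_{j-1}-y_j)$; $x_j:=\tau_j^{-1}[\mu a_{j-1}y_j/2+\tau_{j-1}x_{j-1}-a_{j-1}s_j]$; $v_j:=\nabla f(y_j)-\nabla f(\tilde x_{j-1})+s_j$; (iv) if $\|\xi_j-x_0\|^2<\chi A_jL_j\|y_j-\tilde x_{j-1}\|^2$, the cycle ends with a restart: set $z_l:=\xi_j$, $\bar M_l:=L_j$, $\mu_l:=\mu/2$ and start cycle $l+1$; (v) otherwise, if $\|v_j\|\le\hat\epsilon$, stop and output $(y,v,\xi,L):=(y_j,v_j,\xi_j,L_j)$; else go to iteration $j+1$. *)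

(* Defs.v *)
From HB Require Import structures.
From mathcomp Require Import all_boot all_order all_algebra.
From mathcomp Require Import all_classical all_reals all_analysis.
Set Implicit Arguments. Unset Strict Implicit. Unset Printing Implicit Defensive.
Import Order.TTheory GRing.Theory Num.Theory.
Import numFieldNormedType.Exports.
Local Open Scope ring_scope.

Section Defs.
Variables (R : realType) (n : nat).
Local Notation vec := 'rV[R]_n.

Definition dot (u v : vec) : R := \sum_(i < n) u ord0 i * v ord0 i.
Definition norm2 (u : vec) : R := dot u u.
Definition enorm (u : vec) : R := Num.sqrt (norm2 u).

Definition is_gradient (f : vec -> R) (gradf : vec -> vec) : Prop :=
  forall x, differentiable f x /\ forall u, 'd f x u = dot (gradf x) u.

Definition convex_real (f : vec -> R) : Prop :=
  forall x y (t : R), 0 < t < 1 ->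
    f (t *: x + (1 - t) *: y) <= t * f x + (1 - t) * f y.

Definition convex_ext (h : vec -> \bar R) : Prop :=
  forall (x y : vec) (t : R), 0 < t < 1 ->
    (h (t *: x + (1 - t) *: y)%R <= t%:E * h x + (1 - t)%:E * h y)%E.

Definition proper_ext (h : vec -> \bar R) : Prop :=
  (forall x, h x != -oo%E) /\ exists x, (h x < +oo)%E.

Definition dom (h : vec -> \bar R) : set vec := [set x | (h x < +oo)%E].

Definition strongly_convex_ext (mu : R) (g : vec -> \bar R) : Prop :=
  forall (x y : vec) (t : R), 0 < t < 1 ->
    (g (t *: x + (1 - t) *: y)%R <=
       t%:E * g x + (1 - t)%:E * g y - (mu / 2 * t * (1 - t) * norm2 (x - y))%:E)%E.

Definition phi_of (f : vec -> R) (h : vec -> \bar R) (z : vec) : \bar R :=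
  ((f z)%:E + h z)%E.

Definition Cmu (f : vec -> R) (h : vec -> \bar R) (mubar : R) (zs z : vec) : \bar R :=
  ((8 / mubar)%:E * (phi_of f h z - phi_of f h zs))%E.

Definition lin_f (f : vec -> R) (gradf : vec -> vec) (u x : vec) : R :=
  f x + dot (gradf x) (u - x).

(* a_{j-1} as a function of the trial L *)
Definition acoef (tau A Lv : R) : R :=
  (tau + Num.sqrt (tau ^+ 2 + 4 * tau * A * Lv)) / (2 * Lv).

(* tilde x_{j-1} as a function of the trial L *)
Definition xtil (tau A Lv : R) (yprev xprev : vec) : vec :=
  (A + acoef tau A Lv)^-1 *: (A *: yprev + acoef tau A Lv *: xprev).

Definition is_prox_min (f : vec -> R) (gradf : vec -> vec) (h : vec -> \bar R)
  (Lv : R) (xt y : vec) : Prop :=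
  forall u,
    ((lin_f f gradf y xt + Lv / 2 * norm2 (y - xt))%:E + h y <=
     (lin_f f gradf u xt + Lv / 2 * norm2 (u - xt))%:E + h u)%E.

Definition descent_ok (f : vec -> R) (gradf : vec -> vec) (chi Lv : R) (xt y : vec) : Prop :=
  f y <= lin_f f gradf y xt + (1 - chi) * Lv / 4 * norm2 (y - xt).

Definition rpf_step (f : vec -> R) (gradf : vec -> vec) (h : vec -> \bar R)
  (chi beta mu : R)
  (x y xi xt s v : nat -> vec) (A tau L a : nat -> R) (j : nat) : Prop :=
  let tp := tau j.-1 in let Ap := A j.-1 in let Lp := L j.-1 in
  (exists k : nat,
     (forall i : nat, (i < k)%N ->
        forall yy, is_prox_min f gradf h (beta ^+ i * Lp)
                     (xtil tp Ap (beta ^+ i * Lp) (y j.-1) (x j.-1)) yy ->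
        ~ descent_ok f gradf chi (beta ^+ i * Lp)
                     (xtil tp Ap (beta ^+ i * Lp) (y j.-1) (x j.-1)) yy) /\
     L j = beta ^+ k * Lp /\
     a j.-1 = acoef tp Ap (L j) /\
     xt j.-1 = xtil tp Ap (L j) (y j.-1) (x j.-1) /\
     is_prox_min f gradf h (L j) (xt j.-1) (y j) /\
     descent_ok f gradf chi (L j) (xt j.-1) (y j)) /\
  xi j = (if (phi_of f h (y j) <= phi_of f h (xi j.-1))%E then y j else xi j.-1) /\
  A j = Ap + a j.-1 /\
  tau j = tp + a j.-1 * mu / 2 /\
  s j = L j *: (xt j.-1 - y j) /\
  x j = (tau j)^-1 *: ((mu * a j.-1 / 2) *: y j + tp *: x j.-1 - a j.-1 *: s j) /\
  v j = gradf (y j) - gradf (xt j.-1) + s j.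

Definition rpf_restart (chi : R) (x0 : vec)
  (y xi xt : nat -> vec) (A L : nat -> R) (j : nat) : Prop :=
  norm2 (xi j - x0) < chi * A j * L j * norm2 (y j - xt j.-1).

Definition rpf_stop (eps : R) (v : nat -> vec) (j : nat) : Prop :=
  enorm (v j) <= eps.

(* A cycle started at x0 with parameter mu and L_0 = Lunder, in which the
   iterations 1, ..., J have been generated (so iterations 1..J-1 neither
   restarted nor stopped). *)
Definition rpf_cycle (f : vec -> R) (gradf : vec -> vec) (h : vec -> \bar R)
  (chi beta eps mu : R) (x0 : vec) (Lunder : R) (J : nat)
  (x y xi xt s v : nat -> vec) (A tau L a : nat -> R) : Prop :=
  [/\ x 0 = x0, xi 0 = x0, y 0 = x0 & A 0 = 0] /\ tau 0 = 1 /\ L 0 = Lunder /\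
  (forall j, (1 <= j <= J)%N -> rpf_step f gradf h chi beta mu x y xi xt s v A tau L a j) /\
  (forall j, (1 <= j < J)%N ->
     ~ rpf_restart chi x0 y xi xt A L j /\ ~ rpf_stop eps v j).

Definition Munder_ok (Mprev M0 Mu : R) : Prop :=
  Num.max (Mprev / 4) M0 <= Mu <= Mprev.

(* The outer loop has reached the start of cycle l: z l', Mbar l', mu l'
   (l' < l) are the values produced by cycles 1..l-1, each ending in a restart. *)
Definition rpf_reaches (f : vec -> R) (gradf : vec -> vec) (h : vec -> \bar R)
  (chi beta eps mu0 M0 : R) (z0 : vec) (l : nat)
  (z : nat -> vec) (Mb mu : nat -> R) : Prop :=
  z 0 = z0 /\ Mb 0 = M0 /\ mu 0 = mu0 /\
  forall l', (1 <= l' < l)%N ->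
    exists (Lunder : R) (J : nat) (x y xi xt s v : nat -> vec) (A tau L a : nat -> R),
      [/\ Munder_ok (Mb l'.-1) M0 Lunder, (1 <= J)%N,
          rpf_cycle f gradf h chi beta eps (mu l'.-1) (z l'.-1) Lunder J
                    x y xi xt s v A tau L a,
          rpf_restart chi (z l'.-1) y xi xt A L J &
          [/\ z l' = xi J, Mb l' = L J & mu l' = mu l'.-1 / 2]].

End Defs.

(* Main.v *)
Require Import Defs.
From HB Require Import structures.
From mathcomp Require Import all_boot all_order all_algebra.
From mathcomp Require Import all_classical all_reals all_analysis.
Import Order.TTheory GRing.Theory Num.Theory.
Import numFieldNormedType.Exports.
From mathcomp Require Import lra.
Local Open Scope ring_scope.

Theorem lemmaA1 (R : realType) (n : nat)
  (f : 'rV[R]_n -> R) (gradf : 'rV[R]_n -> 'rV[R]_n) (Lbar : R)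
  (h : 'rV[R]_n -> \bar R) (mubar : R) (zs : 'rV[R]_n)
  (chi beta mu0 M0 eps : R) (z0 : 'rV[R]_n)
  (* standing assumptions on f, h, phi *)
  (hfconv : convex_real f) (hgrad : is_gradient f gradf) (hLbar : 0 <= Lbar)
  (hLip : forall z z', enorm (gradf z' - gradf z) <= Lbar * enorm (z' - z))
  (hproper : proper_ext h) (hlsc : lower_semicontinuous h) (hhconv : convex_ext h)
  (hmubar : 0 < mubar) (hstrong : strongly_convex_ext mubar (phi_of f h))
  (hzs : forall z, (phi_of f h zs <= phi_of f h z)%E)
  (* parameters and inputs of RPF-SFISTA *)
  (hchi : 0 < chi < 1) (hbeta : 1 < beta) (hmu0 : 0 < mu0) (hM0 : 0 < M0)
  (hz0 : dom h z0) (heps : 0 < eps)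
  (* the algorithm has reached cycle l *)
  (l : nat) (hl : (1 <= l)%N)
  (z : nat -> 'rV[R]_n) (Mb mu : nat -> R)
  (hreach : rpf_reaches f gradf h chi beta eps mu0 M0 z0 l z Mb mu)
  (* cycle l, in which iteration J >= 1 has been generated *)
  (Lunder : R) (hLunder : Munder_ok (Mb l.-1) M0 Lunder)
  (J : nat) (hJ : (1 <= J)%N)
  (x y xi xt s v : nat -> 'rV[R]_n) (A tau L a : nat -> R)
  (hcycle : rpf_cycle f gradf h chi beta eps (mu l.-1) (z l.-1) Lunder J
              x y xi xt s v A tau L a) :
  ((norm2 (xi J - z l.-1))%:E <= Cmu f h mubar zs (z l.-1))%E.
Proof.
Proof.
have phiN : forall w, phi_of f h w != -oo%E.
  move=> w; rewrite /phi_of; have := hproper.1 w.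
  by case: (h w).
have phiR : forall w P, (phi_of f h w <= P%:E)%E -> exists r, phi_of f h w = r%:E.
  move=> w P; have := phiN w; case: (phi_of f h w) => [r| |] // _ _; by exists r.
have [r0 E0] : exists r0, phi_of f h zs = r0%:E.
  have hz0' : (h z0 < +oo)%E := hz0.
  have [p Ep] : exists p, h z0 = p%:E.
    move: hz0' (hproper.1 z0); case: (h z0) => [p| |] // _ _; by exists p.
  apply: (phiR zs (f z0 + p)); by rewrite (le_trans (hzs z0)) // /phi_of Ep.
case: hcycle => [[hx0 hxi0 hy0 hA0]] [_ [_ [hstep _]]].
have mono : forall j, (j <= J)%N -> (phi_of f h (xi j) <= phi_of f h (z l.-1))%E.
  elim=> [|j IH] hj; first by rewrite hxi0.
  have [_ [-> _]] := hstep j.+1 (ltac:(apply/andP; split => //)).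
  have := IH (ltac:(apply: ltnW hj)).
  case: ifP => //= Hle Hp; exact: le_trans Hle Hp.
have hmon := mono J (leqnn J).
rewrite /Cmu.
have := phiN (z l.-1).
case Ez: (phi_of f h (z l.-1)) hmon => [r| |] // hmon _; last first.
  rewrite E0 /= mulry gtr0_sg ?mul1e ?leey //; by rewrite divr_gt0.
have [r1 E1] := phiR _ _ hmon.
set m := (1/2 : R) *: xi J + (1 - 1/2) *: z l.-1.
have hm := hzs m.
have hs := hstrong (xi J) (z l.-1) (1/2).
have [rm Em] : exists rm, phi_of f h m = rm%:E.
  have hh : (phi_of f h m <= (1/2 * r1 + (1-1/2) * r - mubar / 2 * (1/2) * (1 - 1/2) * norm2 (xi J - z l.-1))%:E)%E.
    rewrite /m; apply: le_trans (hs _) _; first by apply/andP; split; lra.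
    by rewrite E1 Ez EFinB EFinD !EFinM.
  exact: phiR _ _ hh.
rewrite /m in Em.
have {}hs := hs (ltac:(apply/andP; split; lra)).
have hs' : rm <= 1/2 * r1 + (1-1/2) * r - mubar / 2 * (1/2) * (1 - 1/2) * norm2 (xi J - z l.-1).
  by rewrite -lee_fin EFinB EFinD !EFinM -E1 -Ez -Em.
rewrite Em E0 lee_fin in hm.
rewrite E1 lee_fin in hmon.
rewrite E0 -EFinB -EFinM lee_fin.
set N := norm2 (xi J - z l.-1) in hs' *.
have key : mubar * N <= 8 * (r - r0) by lra.
have hk : mubar * mubar^-1 = 1 by rewrite divff // gt_eqF.
have hk0 : 0 < mubar^-1 by rewrite invr_gt0.
rewrite mulrAC ler_pdivlMr //; lra.
Qed.
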